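(* In any execution of the algorithm described in the context on a camera object $S$ and an associated versioned CAS object $O$ (after $O$'s constructor has completed), in every configuration the only VNode in the version list of $O$ that can have an invalid timestamp is the head of the version list.
   Context: Camera $S$ has an integer field timestamp, initially 0; takeSnapshot(): read $t:=S.\mathit{timestamp}$, perform CAS$(S.\mathit{timestamp},t,t+1)$, return $t$. A VNode has fields val and nextv (both immutable after creation) and ts (an integer or special value TBD, initially TBD). Versioned CAS object $O$ has a field $\mathit{VHead}$. Constructor with value $v$: $\mathit{VHead}:=$ new VNode(val $v$, nextv NULL); initTS($\mathit{VHead}$). initTS($n$): if $n.ts=$TBD, read $c:=S.\mathit{timestamp}$ and CAS$(n.ts,\mathrm{TBD},c)$. readSnapshot($ts$): $node:=\mathit{VHead}$; initTS($node$); while $node.ts>ts$, $node:=node.nextv$; return $node.val$. vRead(): $h:=\mathit{VHead}$; initTS($h$); return $h.val$. vCAS(oldV,newV): $h:=\mathit{VHead}$; initTS($h$); if $h.val\neq$ oldV return false; if newV $=$ oldV return true; $m:=$ new VNode(val newV, nextv $h$); if CAS$(\mathit{VHead},h,m)$ succeeds, initTS($m$) and return true; else delete $m$, call initTS on the current value of $\mathit{VHead}$, return false. The version list of $O$ is obtained by starting at the VNode pointed to by $\mathit{VHead}$ and following nextv pointers; its head is the VNode pointed to by $\mathit{VHead}$. A VNode's timestamp is valid in a configuration if its ts field is not TBD there, and invalid otherwise. *)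

(* Defs.v *)
(* Operational model of the camera S and one versioned CAS
   object O: shared memory, per-process program counters, and an
   interleaving step relation whose atomic steps are the shared-memory
   primitives (reads / CAS / allocation) of the algorithm. *)
From Stdlib Require Import Arith.

Set Implicit Arguments.

Section Model.
Variable V : Type.   (* values stored in O *)
Variable P : Type.

(* VNodes live in a heap indexed by locations (nat). ts = None is TBD. *)
Record vnode := VNode { val : V; nextv : option nat; ts : option nat }.

Record mem := Mem {
  timestamp : nat;
  vhead : nat;
  heap : nat -> option vnode
}.

Definition upd (h : nat -> option vnode) (l : nat) (x : option vnode) :=
  fun l' => if Nat.eqb l' l then x else h l'.

(* where to continue after an initTS call *)
Inductive ret :=
| RetRS (t : nat) (n : nat)
| RetVR
| RetVC (oldV newV : V) (h : nat)
| RetDone.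

Inductive pc :=
| Idle
| TS0 | TS1 (t : nat)
| RS0 (t : nat) | RSloop (t : nat) (n : nat)
| VR0
| VC0 (oldV newV : V)
| VC1 (oldV newV : V) (h : nat)
| VC2 (oldV newV : V) (h m : nat)
| VC3
| IT0 (n : nat) (r : ret)
| IT1 (n : nat) (r : ret)
| IT2 (n : nat) (c : nat) (r : ret).

Definition ret_pc (r : ret) : pc :=
  match r with
  | RetRS t n => RSloop t n
  | RetVR => Idle
  | RetVC o nw h => VC1 o nw h
  | RetDone => Idle
  end.

Inductive pstep : pc -> mem -> pc -> mem -> Prop :=
| s_inv_ts m : pstep Idle m TS0 m
| s_inv_rs m t : pstep Idle m (RS0 t) m
| s_inv_vr m : pstep Idle m VR0 m
| s_inv_vc m o nw : pstep Idle m (VC0 o nw) m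
| s_ts0 m : pstep TS0 m (TS1 (timestamp m)) m
| s_ts1_ok m t : timestamp m = t ->
    pstep (TS1 t) m Idle (Mem (S t) (vhead m) (heap m))
| s_ts1_fail m t : timestamp m <> t -> pstep (TS1 t) m Idle m
| s_rs0 m t : pstep (RS0 t) m (IT0 (vhead m) (RetRS t (vhead m))) m
| s_rs_next m t nd x t' nd' : heap m nd = Some x -> ts x = Some t' -> t' > t ->
    nextv x = Some nd' -> pstep (RSloop t nd) m (RSloop t nd') m
| s_rs_stop m t nd x : heap m nd = Some x ->
    (forall t', ts x = Some t' -> t' <= t) ->   (* a TBD ts also ends the loop *)
    pstep (RSloop t nd) m Idle m
| s_vr0 m : pstep VR0 m (IT0 (vhead m) RetVR) m
| s_vc0 m o nw : pstep (VC0 o nw) m (IT0 (vhead m) (RetVC o nw (vhead m))) m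
| s_vc1_neq m o nw h x : heap m h = Some x -> val x <> o ->
    pstep (VC1 o nw h) m Idle m
| s_vc1_same m o nw h x : heap m h = Some x -> val x = o -> nw = o ->
    pstep (VC1 o nw h) m Idle m
| s_vc1_alloc m o nw h x l : heap m h = Some x -> val x = o -> nw <> o ->
    heap m l = None ->
    pstep (VC1 o nw h) m (VC2 o nw h l)
      (Mem (timestamp m) (vhead m)
           (upd (heap m) l (Some (VNode nw (Some h) None))))
| s_vc2_ok m o nw h l : vhead m = h ->
    pstep (VC2 o nw h l) m (IT0 l RetDone) (Mem (timestamp m) l (heap m))
| s_vc2_fail m o nw h l : vhead m <> h ->
    pstep (VC2 o nw h l) m VC3 m   (* "delete m": modelled as a no-op *)
| s_vc3 m : pstep VC3 m (IT0 (vhead m) RetDone) m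
| s_it0_valid m n r x t : heap m n = Some x -> ts x = Some t ->
    pstep (IT0 n r) m (ret_pc r) m
| s_it0_tbd m n r x : heap m n = Some x -> ts x = None ->
    pstep (IT0 n r) m (IT1 n r) m
| s_it1 m n r : pstep (IT1 n r) m (IT2 n (timestamp m) r) m
| s_it2_ok m n c r x : heap m n = Some x -> ts x = None ->
    pstep (IT2 n c r) m (ret_pc r)
      (Mem (timestamp m) (vhead m)
           (upd (heap m) n (Some (VNode (val x) (nextv x) (Some c)))))
| s_it2_fail m n c r x t : heap m n = Some x -> ts x = Some t ->
    pstep (IT2 n c r) m (ret_pc r) m.

Record config := Config { cmem : mem; cpc : P -> pc }.

Definition step (c c' : config) : Prop :=
  exists p : P,
    pstep (cpc c p) (cmem c) (cpc c' p) (cmem c') /\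
    (forall p', p' <> p -> cpc c' p' = cpc c p').

Inductive reachable (c : config) : config -> Prop :=
| reach_refl : reachable c c
| reach_step c1 c2 : reachable c c1 -> step c1 c2 -> reachable c c2.

(* Configurations right after O's constructor completed: the heap holds only
   the initial VNode (val v0, nextv NULL) with a valid timestamp, pointed to
   by VHead; S.timestamp is arbitrary; every process is idle or in the middle
   of a takeSnapshot (the only operation possible before O exists). *)
Definition camera_only (q : pc) : Prop :=
  q = Idle \/ q = TS0 \/ exists t, q = TS1 t.

Definition init_config (v0 : V) (c : config) : Prop :=
  (exists t0, heap (cmem c) (vhead (cmem c)) = Some (VNode v0 None (Some t0))) /\
  (forall l, l <> vhead (cmem c) -> heap (cmem c) l = None) /\
  (forall p, camera_only (cpc c p)).

Inductive in_vlist (m : mem) : nat -> Prop :=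
| vl_head : in_vlist m (vhead m)
| vl_next l x l' : in_vlist m l -> heap m l = Some x -> nextv x = Some l' ->
    in_vlist m l'.
End Model.

(* Main.v *)
Require Import Defs.
From Stdlib Require Import Arith Lia Classical.

Section Proof.
Variable V P : Type.

Definition mle (m m' : mem V) : Prop :=
  forall n x, heap m n = Some x -> exists y, heap m' n = Some y /\
    nextv y = nextv x /\ (forall t, ts x = Some t -> ts y = Some t).

Definition pinv (m : mem V) (q : pc V) : Prop :=
  match q with
  | VC1 _ _ h => exists x t, heap m h = Some x /\ ts x = Some t
  | VC2 _ _ h l => (exists x t, heap m h = Some x /\ ts x = Some t) /\
                   (exists y, heap m l = Some y /\ nextv y = Some h)
  | IT0 n r | IT1 n r | IT2 n _ r =>
      match r with RetVC _ _ h => n = h | _ => True end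
  | _ => True
  end.

Definition minv (m : mem V) : Prop :=
  (exists x, heap m (vhead m) = Some x) /\
  (forall n x n', heap m n = Some x -> nextv x = Some n' -> exists y, heap m n' = Some y) /\
  (forall l x, in_vlist m l -> heap m l = Some x -> ts x = None -> l = vhead m).

Lemma upd_eq (h : nat -> option (vnode V)) l x l' :
  upd h l x l' = if Nat.eqb l' l then x else h l'.
Proof. reflexivity. Qed.

Lemma pinv_mono m m' q : mle m m' -> pinv m q -> pinv m' q.
Proof.
  intros Hle; destruct q; simpl; auto.
  - intros (x & t & H1 & H2). destruct (Hle _ _ H1) as (y & Hy & _ & Ht).
    eauto.
  - intros [(x & t & H1 & H2) (z & H3 & H4)].
    destruct (Hle _ _ H1) as (y & Hy & _ & Ht).
    destruct (Hle _ _ H3) as (y' & Hy' & Hn & _).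
    split; eauto. exists y'; split; congruence.
Qed.

Lemma pstep_mle q m q' m' : pstep q m q' m' -> mle m m'.
Proof.
  intros Hs; destruct Hs; unfold mle; simpl; intros n0 x0 Hn;
    try (exists x0; repeat split; auto; fail).
  - rewrite upd_eq. destruct (Nat.eqb_spec n0 l). subst; congruence.
    exists x0; auto.
  - rewrite upd_eq. destruct (Nat.eqb_spec n0 n).
    + subst. rewrite H in Hn. inversion Hn; subst.
      eexists; split; [reflexivity|]. simpl; split; auto. intros t; congruence.
    + exists x0; auto.
Qed.

Lemma vlist_same (m m' : mem V) l :
  in_vlist m l -> heap m' = heap m -> vhead m' = vhead m -> in_vlist m' l.
Proof.
  intros H Hh Hv; induction H.
  - rewrite <- Hv; constructor.
  - eapply vl_next; eauto. rewrite Hh; eauto.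
Qed.

Lemma step_inv q m q' m' : minv m -> pinv m q -> pstep q m q' m' -> minv m' /\ pinv m' q'.
Proof.
  intros [Hh [Hn Hl]] Hp Hs; destruct Hs; simpl in *;
    try (split; [repeat split; auto|]; simpl; auto; fail).
  - (* ts1_ok *)
    split; auto. repeat split; auto.
    intros l x Hv; apply Hl. eapply vlist_same; eauto.
  - (* alloc *)
    assert (Hlh : forall k, heap m k <> None -> k <> l) by (intros k Hk E; subst; auto).
    assert (Hv : forall k, in_vlist (Mem (timestamp m) (vhead m)
        (upd (heap m) l (Some (VNode nw (Some h) None)))) k ->
        in_vlist m k /\ heap m k <> None).
    { intros k Hk; induction Hk; simpl in *.
      - split; [constructor|]. destruct Hh; congruence.
      - destruct IHHk as [Hk1 Hk2]. rewrite upd_eq in H3.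
        destruct (Nat.eqb_spec l0 l); [congruence|].
        split; [eapply vl_next; eauto|].
        destruct (Hn _ _ _ H3 H4); congruence. }
    split.
    + repeat split; simpl.
      * rewrite upd_eq. destruct (Nat.eqb_spec (vhead m) l); eauto.
      * intros n x0 n' E1 E2. rewrite upd_eq in E1 |- *.
        destruct (Nat.eqb_spec n l).
        -- inversion E1; subst; simpl in E2; inversion E2; subst.
           destruct (Nat.eqb_spec n' l); [subst; congruence| eauto].
        -- destruct (Hn _ _ _ E1 E2) as [y Hy].
           destruct (Nat.eqb_spec n' l); [subst; congruence| eauto].
      * intros k x0 Hk E1 E2. destruct (Hv _ Hk) as [Hk1 Hk2].
        rewrite upd_eq in E1. destruct (Nat.eqb_spec k l); [congruence|].
        eapply Hl; eauto.
    + simpl. destruct Hp as (x0 & t & E1 & E2). split.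
      * exists x0, t. rewrite upd_eq. destruct (Nat.eqb_spec h l); [subst; congruence|]; auto.
      * rewrite upd_eq, Nat.eqb_refl. eauto.
  - (* vc2_ok *)
    destruct Hp as [(x0 & t & E1 & E2) (y & E3 & E4)].
    assert (Hv : forall k, in_vlist (Mem (timestamp m) l (heap m)) k -> k = l \/ in_vlist m k).
    { intros k Hk; induction Hk; simpl in *; auto.
      destruct IHHk as [->|Hk1].
      - rewrite E3 in H0; inversion H0; subst. rewrite E4 in H1; inversion H1; subst.
        right; constructor.
      - right; eapply vl_next; eauto. }
    split; [|exact I]. repeat split; simpl; eauto.
    intros k x1 Hk F1 F2. destruct (Hv _ Hk) as [|Hk1]; auto.
    pose proof (Hl _ _ Hk1 F1 F2). subst. congruence.
  - (* it0_valid *)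
    split; [repeat split; auto|]. destruct r; simpl in *; subst; eauto.
  - (* it2_ok *)
    assert (Hv : forall k, in_vlist (Mem (timestamp m) (vhead m)
        (upd (heap m) n (Some (VNode (val x) (nextv x) (Some c))))) k -> in_vlist m k).
    { intros k Hk; induction Hk; simpl in *; [constructor|].
      rewrite upd_eq in H1. destruct (Nat.eqb_spec l n).
      - subst. inversion H1; subst; simpl in *. eapply vl_next; eauto.
      - eapply vl_next; eauto. }
    split.
    + repeat split; simpl.
      * rewrite upd_eq. destruct (Nat.eqb_spec (vhead m) n); eauto.
      * intros n0 x0 n' E1 E2. rewrite upd_eq in E1 |- *.
        destruct (Nat.eqb_spec n0 n).
        -- inversion E1; subst; simpl in E2.
           destruct (Hn _ _ _ H E2) as [y Hy].
           destruct (Nat.eqb_spec n' n); eauto.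
        -- destruct (Hn _ _ _ E1 E2) as [y Hy].
           destruct (Nat.eqb_spec n' n); eauto.
      * intros k x0 Hk E1 E2. rewrite upd_eq in E1.
        destruct (Nat.eqb_spec k n); [subst; inversion E1; subst; discriminate|].
        eapply Hl; eauto.
    + destruct r; simpl in *; subst; auto.
      exists (VNode (val x) (nextv x) (Some c)), c. rewrite upd_eq, Nat.eqb_refl; auto.
  - (* it2_fail *)
    split; [repeat split; auto|]. destruct r; simpl in *; subst; eauto.
Qed.

Definition Inv (c : config V P) := minv (cmem c) /\ forall p, pinv (cmem c) (cpc c p).

Lemma reach_inv v0 c0 c : init_config v0 c0 -> reachable c0 c -> Inv c.
Proof.
  intros [[t0 H0] [Hnone Hcam]] Hr. induction Hr.
  - split.
    + repeat split; eauto.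
      * intros n x n' E1 E2. destruct (Nat.eq_dec n (vhead (cmem c0))).
        -- subst. rewrite H0 in E1; inversion E1; subst; discriminate.
        -- rewrite Hnone in E1; congruence.
      * intros l x _ E1 _. destruct (Nat.eq_dec l (vhead (cmem c0))); auto.
        rewrite Hnone in E1; congruence.
    + intros p. destruct (Hcam p) as [E|[E|[t E]]]; rewrite E; exact I.
  - destruct IHHr as [Hm Hp]. destruct H as [p [Hs Ho]].
    destruct (step_inv _ _ _ _ Hm (Hp p) Hs) as [Hm' Hp'].
    split; auto. intros p'. destruct (classic (p' = p)) as [->|Hne]; auto.
    rewrite (Ho p' Hne). eapply pinv_mono; [eapply pstep_mle; eauto|]. auto.
Qed.
End Proof.

Theorem lemmaA3 (V P : Type) (v0 : V) (c0 c : config V P) :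
  init_config v0 c0 -> reachable c0 c ->
  forall (l : nat) (x : vnode V),
    in_vlist (cmem c) l -> heap (cmem c) l = Some x -> ts x = None ->
    l = vhead (cmem c).
Proof.
  intros Hi Hr. destruct (@reach_inv V P v0 c0 c Hi Hr) as [[_ [_ H]] _]. exact H.
Qed.
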